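(* Let $\mathbf{k}$ be an algebraically closed field, let $K_0(\mathrm{Stck}_{\mathbf{k}})$ be the Grothendieck ring of algebraic stacks of finite type over $\mathbf{k}$ with affine automorphism group schemes, let $\mathbb{L}$ be the class of the affine line and $q=\mathbb{L}^{-1}$. Let $b\in K_0(\mathrm{Stck}_{\mathbf{k}})$, let $m\in\mathbb{Z}$ and let $n$ be a nonzero integer, and put $$a=\frac{b\,q^{m}}{1-q^{n}}\in K_0(\mathrm{Stck}_{\mathbf{k}}).$$ Write $\zeta_b(T)=1+\sum_{k\ge1}\sigma^k b\,T^k$. Then $$\zeta_{a}(T)=1+\sum_{k=1}^\infty\left(\sum_{\underline{k}=(k_1,\dots,k_s):\ \sum_{j=1}^s jk_j=k} R_{k_1,k_2,\ldots,k_s}(q^{n},q^{2n},\ldots,q^{sn})\prod_{j=1}^s(\sigma^j b)^{k_j}\right)q^{km}T^k,$$ where the inner sum runs over all partitions $\underline{k}=(k_1,\dots,k_s)$ (with $k_j\ge 0$) of the integer $k$.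
   Context: $K_0(\mathrm{Stck}_{\mathbf{k}})$ is the abelian group generated by classes $[X]$ of such stacks modulo: $[X]$ depends only on the isomorphism class; $[X]=[Y]+[U]$ for $Y$ a closed substack with complement $U$; $[E]=\mathbb{L}^r[X]$ for a vector bundle $E\to X$ of constant rank $r$; multiplication is given by the fibred product. In this ring $\mathbb{L}$ and $\mathbb{L}^j-1$ ($j\ge1$) are invertible, and the natural map from the Grothendieck ring $K_0(\mathcal{V}_{\mathbf{k}})$ of quasi-projective varieties localized at $\mathbb{L}$ and all $\mathbb{L}^j-1$ is an isomorphism onto $K_0(\mathrm{Stck}_{\mathbf{k}})$. A pre-$\lambda$ structure on a ring $R$ assigns to each $a\in R$ a series $\lambda_a(T)\in 1+T R[[T]]$ with $\lambda_a(T)\equiv 1+aT \bmod T^2$ and $\lambda_{a+b}(T)=\lambda_a(T)\lambda_b(T)$. On $K_0(\mathcal{V}_{\mathbf{k}})$ the Kapranov zeta function is $\zeta_{[X]}(T)=1+\sum_{k\ge1}[S^kX]^*T^k$, where $[S^kX]^*=\sum_{\{k_i\}:\sum ik_i=k}[((\prod_i X^{k_i})\setminus\Delta)/\prod_i S_{k_i}]$, $\Delta$ being the large diagonal (tuples with two coinciding points); in characteristic zero this equals the class of the symmetric power $X^k/S_k$. It satisfies $\zeta_{\mathbb{L}^sX}(T)=\zeta_X(\mathbb{L}^sT)$. Here $\zeta$ denotes the extension (due to Ekedahl) of this pre-$\lambda$ structure to $K_0(\mathrm{Stck}_{\mathbf{k}})$, i.e. the pre-$\lambda$ structure $a\mapsto\zeta_a(T)$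 on $K_0(\mathrm{Stck}_{\mathbf{k}})$ agreeing with the Kapranov zeta function on classes of varieties and satisfying $\zeta_{\mathbb{L}^s a}(T)=\zeta_a(\mathbb{L}^sT)$ for all $s\in\mathbb{Z}$. For nonnegative integers $n_1,\dots,n_s$, $R_{n_1,\ldots,n_s}(q_1,\ldots,q_s)$ is the rational function whose Taylor expansion is $$\sum_{\{i^{(j)}_r\}}\prod_{j=1}^s\prod_{r=1}^{n_j} q_j^{\,i^{(j)}_r},$$ the sum running over all collections of integers $i^{(j)}_r\ge0$ ($1\le j\le s$, $1\le r\le n_j$) with $i^{(j)}_1<i^{(j)}_2<\dots<i^{(j)}_{n_j}$ for each $j$ and $i^{(j_1)}_{r_1}\ne i^{(j_2)}_{r_2}$ whenever $(j_1,r_1)\ne(j_2,r_2)$. (Its denominator is a product of factors of the form $1-$monomial, so its value at $q^n,\dots,q^{sn}$ is a well-defined element of $K_0(\mathrm{Stck}_{\mathbf{k}})$.) *)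

(* Defs.v *)
From mathcomp Require Import all_boot all_algebra.
Set Implicit Arguments. Unset Strict Implicit. Unset Printing Implicit Defensive.
Import GRing.Theory.
Local Open Scope ring_scope.

(* A pre-lambda structure on a commutative ring R, given by the coefficients
   sigma a k := sigma^k a of zeta_a(T) = 1 + sum_{k>=1} sigma^k a T^k. *)
Definition pre_lambda (R : comRingType) (sigma : R -> nat -> R) : Prop :=
  [/\ forall a, sigma a 0%N = 1,
      forall a, sigma a 1%N = a &
      forall a b k, sigma (a + b) k = \sum_(i < k.+1) sigma a i * sigma b (k - i)%N].

(* The axioms of K_0(Stck_k) used by the statement: L and all L^j - 1 (j >= 1)
   are invertible, and zeta_{L^s a}(T) = zeta_a(L^s T) for every s in Z,
   i.e. sigma^k (L^s a) = L^(s k) sigma^k a. *)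
Definition stack_grothendieck_axioms (R : comUnitRingType) (L : R)
    (sigma : R -> nat -> R) : Prop :=
  [/\ L \is a GRing.unit,
      forall j : nat, (0 < j)%N -> L ^+ j - 1 \is a GRing.unit,
      pre_lambda sigma &
      forall (s : int) (a : R) (k : nat), sigma (L ^ s * a) k = L ^ (s * k%:Z) * sigma a k].

Definition geom (R : unitRingType) (M : R) : R := (1 - M)^-1.

(* Value at the point x = (x_1,...,x_s) of the rational function
   R_{c_1,...,c_s}(q_1,...,q_s) whose Taylor expansion is
     sum over collections i^{(j)}_r (1<=j<=s, 1<=r<=c_j), increasing in r,
     pairwise distinct, of prod q_j^{i^{(j)}_r}.
   Such a collection is the same as: a set of N = sum c_j distinct integers
   i_1 < ... < i_N together with a word w in colours of content c (the colour
   of the t-th smallest integer).  Writing i_1 = e_1, i_t = i_{t-1} + 1 + e_t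
   (e_t >= 0), the sum over the e_t of prod_t x_{w_t}^{i_t} is
     prod_{t >= 2} M_t * prod_{t >= 1} 1/(1 - M_t),  M_t = prod_{u >= t} x_{w_u}.
   Colours are indexed by 'I_s (colour j : 'I_s stands for j+1). *)
Definition Rval (R : unitRingType) (s : nat) (c : 'I_s -> nat) (x : 'I_s -> R) : R :=
  \sum_(w : {ffun 'I_(\sum_(j < s) c j) -> 'I_s}
          | [forall j : 'I_s, #|[pred t | w t == j]| == c j])
    \prod_(t < \sum_(j < s) c j)
      (let M := \prod_(u < \sum_(j < s) c j | (t <= u)%N) x (w u) in
       (if t == 0%N :> nat then 1 else M) * geom M).

(* Main.v *)
Require Import Defs.
From mathcomp Require Import all_boot all_algebra.
From mathcomp Require Import zify ring.
From Stdlib Require Import FunctionalExtensionality.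
Set Implicit Arguments. Unset Strict Implicit. Unset Printing Implicit Defensive.
Import GRing.Theory.
Local Open Scope ring_scope.

Definition fcons (N : nat) (T : Type) (x : T) (w : {ffun 'I_N -> T}) : {ffun 'I_N.+1 -> T} :=
  [ffun i => if unlift ord0 i is Some j then w j else x].

Lemma fcons0 N T (x : T) (w : {ffun 'I_N -> T}) : fcons x w ord0 = x.
Proof. by rewrite ffunE unlift_none. Qed.

Lemma fconsS N T (x : T) (w : {ffun 'I_N -> T}) j : fcons x w (lift ord0 j) = w j.
Proof. by rewrite ffunE liftK. Qed.

Lemma sum_fcons (R : nmodType) N (T : finType) (F : {ffun 'I_N.+1 -> T} -> R) :
  \sum_w F w = \sum_(x : T) \sum_(w : {ffun 'I_N -> T}) F (fcons x w).
Proof.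
rewrite pair_bigA /=.
rewrite (reindex (fun p : T * {ffun 'I_N -> T} => fcons p.1 p.2)) //=.
exists (fun w : {ffun 'I_N.+1 -> T} => (w ord0, [ffun j => w (lift ord0 j)])).
  move=> [x w] _ /=; rewrite fcons0; congr (_, _); apply/ffunP => j.
  by rewrite ffunE fconsS.
move=> w _ /=; apply/ffunP => i; rewrite ffunE.
case: unliftP => [j ->|->]; by rewrite ?ffunE.
Qed.

Lemma sum_part N K (w : {ffun 'I_N -> 'I_K}) (F : 'I_K -> nat) :
  (\sum_(t < N) F (w t) = \sum_(j < K) F j * #|[pred t | w t == j]|)%N.
Proof.
rewrite (partition_big w xpredT) //=; apply eq_bigr => j _.
rewrite (eq_bigr (fun=> F j)) => [|t /eqP->//].
by rewrite sum_nat_const mulnC.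
Qed.

Lemma prod_part (R : comRingType) N K (w : {ffun 'I_N -> 'I_K}) (F : 'I_K -> R) :
  \prod_(t < N) F (w t) = \prod_(j < K) F j ^+ #|[pred t | w t == j]|.
Proof.
rewrite (partition_big w xpredT) //=; apply eq_bigr => j _.
rewrite (eq_bigr (fun=> F j)) => [|t /eqP->//].
by rewrite prodr_const.
Qed.

Definition Rterm (R : unitRingType) N K (x : 'I_K -> R) (w : {ffun 'I_N -> 'I_K}) : R :=
  \prod_(t < N)
      (let M := \prod_(u < N | (t <= u)%N) x (w u) in
       (if t == 0%N :> nat then 1 else M) * geom M).

Lemma Rterm_cons (R : comUnitRingType) N K (x : 'I_K -> R) y (w : {ffun 'I_N -> 'I_K}) :
  Rterm x (fcons y w) = geom (x y * \prod_(u < N) x (w u)) *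
     (\prod_(u < N) x (w u) * Rterm x w).
Proof.
rewrite /Rterm big_ord_recl /=.
have HM : forall t : 'I_N, \prod_(u < N.+1 | (lift ord0 t <= u)%N) x (fcons y w u)
              = \prod_(u < N | (t <= u)%N) x (w u).
  move=> t; rewrite big_mkcond big_ord_recl /=.
  rewrite mul1r [RHS]big_mkcond; apply eq_bigr => u _.
  by rewrite fconsS /bump !leq0n !add1n ltnS.
have H0 : \prod_(u < N.+1 | (@ord0 N <= u)%N) x (fcons y w u) = x y * \prod_(u < N) x (w u).
  rewrite big_ord_recl /= fcons0; congr (_ * _); apply eq_bigr => u _; by rewrite fconsS.
rewrite H0 mul1r; congr (_ * _).
rewrite (eq_bigr (fun t : 'I_N => (\prod_(u < N | (t <= u)%N) x (w u)) *
    geom (\prod_(u < N | (t <= u)%N) x (w u)))); last by move=> t _; rewrite HM.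
case: N w {HM H0} => [|N] w; first by rewrite !big_ord0 mul1r.
rewrite !big_ord_recl /= mul1r.
by rewrite mulrA.
Qed.

Definition wt N K (w : {ffun 'I_N -> 'I_K}) : nat := (\sum_(t < N) (w t).+1)%N.

Definition Phi (R : comUnitRingType) (Q : R) (sb : nat -> R) N K (w : {ffun 'I_N -> 'I_K}) : R :=
  Rterm (fun j : 'I_K => Q ^+ j.+1) w * \prod_(t < N) sb (w t).+1.

Definition D (R : comUnitRingType) (Q : R) (sb : nat -> R) N K (r : nat) : R :=
  \sum_(w : {ffun 'I_N -> 'I_K} | wt w == r) Phi Q sb w.

Lemma wt_cons N K y (w : {ffun 'I_N -> 'I_K}) : wt (fcons y w) = (y.+1 + wt w)%N.
Proof.
rewrite /wt big_ord_recl fcons0; congr (_ + _)%N; apply eq_bigr => t _; by rewrite fconsS.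
Qed.

Lemma wt_ge N K (w : {ffun 'I_N -> 'I_K}) : (N <= wt w)%N.
Proof.
rewrite /wt -[X in (X <= _)%N]card_ord -sum1_card.
by apply: leq_sum => t _.
Qed.

Lemma M0 (R : comUnitRingType) (Q : R) N K (w : {ffun 'I_N -> 'I_K}) :
  \prod_(u < N) Q ^+ (w u).+1 = Q ^+ wt w.
Proof. by rewrite prodrXr. Qed.

Lemma Phi_cons (R : comUnitRingType) (Q : R) sb N K y (w : {ffun 'I_N -> 'I_K}) :
  Phi Q sb (fcons y w) = sb y.+1 * geom (Q ^+ (y.+1 + wt w)) * Q ^+ wt w * Phi Q sb w.
Proof.
rewrite /Phi Rterm_cons M0 -exprD big_ord_recl fcons0.
rewrite (eq_bigr (fun t => sb (w t).+1)); last by move=> t _; rewrite fconsS.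
ring.
Qed.

Lemma D0 (R : comUnitRingType) (Q : R) sb K r : D Q sb 0 K r = (r == 0%N)%:R.
Proof.
rewrite /D /wt.
under eq_bigl do rewrite big_ord0.
case: r => [|r] /=; last by rewrite big_pred0.
rewrite (eq_bigr (fun=> 1)); first by rewrite sumr_const card_ffun !card_ord.
move=> w _; by rewrite /Phi /Rterm !big_ord0 mulr1.
Qed.

Lemma DS (R : comUnitRingType) (Q : R) sb N K r :
  D Q sb N.+1 K r = geom (Q ^+ r) *
    \sum_(y < K | (y < r)%N) sb y.+1 * Q ^+ (r - y.+1) * D Q sb N K (r - y.+1).
Proof.
rewrite /D big_mkcond sum_fcons mulr_sumr [RHS]big_mkcond; apply eq_bigr => y _ /=.
case: ltnP => Hy.
  rewrite !mulr_sumr [RHS]big_mkcond; apply eq_bigr => w _.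
  rewrite wt_cons.
  have -> : (y.+1 + wt w == r)%N = (wt w == r - y.+1)%N.
    apply/eqP/eqP => [<-|->]; first by rewrite addKn.
    by rewrite subnKC.
  case: eqP => [Hw|_] /=; last by rewrite ?mulr0.
  rewrite Phi_cons Hw subnKC //; ring.
apply: big1 => w _; rewrite wt_cons.
case: eqP => // Hr; exfalso; move: Hy; rewrite -Hr; lia.
Qed.

Lemma D_big (R : comUnitRingType) (Q : R) sb N K r : (r < N)%N -> D Q sb N K r = 0.
Proof.
move=> Hr; apply: big1 => w /eqP Hw; have := wt_ge w; rewrite Hw; lia.
Qed.

Definition T (R : comUnitRingType) (Q : R) (sb : nat -> R) K r : R :=
  \sum_(N < r.+1) D Q sb N K r.

Lemma sum_trunc (R : nmodType) n1 n2 (F : nat -> R) : (n1 <= n2)%N ->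
  (forall i, (n1 <= i)%N -> F i = 0) -> \sum_(i < n2) F i = \sum_(i < n1) F i.
Proof.
move=> H12 HF; rewrite [RHS](big_ord_widen n2) // [RHS]big_mkcond.
apply eq_bigr => i _; case: ltnP => // H; by rewrite HF.
Qed.

Lemma T_rec (R : comUnitRingType) (Q : R) sb K r : (0 < r)%N -> (r <= K)%N ->
  T Q sb K r = geom (Q ^+ r) * \sum_(i < r) sb i.+1 * Q ^+ (r - i.+1) * T Q sb K (r - i.+1).
Proof.
move=> r0 rK; rewrite /T big_ord_recl D0.
have -> : (r == 0%N) = false by lia.
rewrite add0r.
rewrite (eq_bigr (fun N : 'I_r => geom (Q ^+ r) *
    \sum_(y < K | (y < r)%N) sb y.+1 * Q ^+ (r - y.+1) * D Q sb N K (r - y.+1))); last first.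
  by move=> N _; rewrite lift0 DS.
rewrite -mulr_sumr exchange_big /=; congr (_ * _).
rewrite [RHS](big_ord_widen K (fun i => sb i.+1 * Q ^+ (r - i.+1) * T Q sb K (r - i.+1))) //.
apply eq_bigr => y Hy; rewrite -mulr_sumr; congr (_ * _).
rewrite /T (sum_trunc (F := fun i => D Q sb i K (r - y.+1)) (n1 := (r - y.+1).+1)) //; first lia.
move=> i Hi; apply D_big; lia.
Qed.

Lemma sig_T (R : comUnitRingType) (sigma : R -> nat -> R) (Hs : pre_lambda sigma)
  (P Q a b : R) (HP : forall j, sigma (P * b) j = P ^+ j * sigma b j)
  (HQ : forall j, sigma (Q * a) j = Q ^+ j * sigma a j)
  (Ha : a = P * b + Q * a)
  (HU : forall r, (0 < r)%N -> 1 - Q ^+ r \is a GRing.unit) K :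
  forall r, (r <= K)%N -> sigma a r = P ^+ r * T Q (sigma b) K r.
Proof.
case: Hs => H0 H1 Hadd.
elim/ltn_ind => r IH rK.
case: r IH rK => [|r] IH rK.
  by rewrite H0 /T big_ord1 D0 expr0 mul1r.
have rec : sigma a r.+1 * (1 - Q ^+ r.+1) =
   \sum_(i < r.+1) P ^+ i.+1 * sigma b i.+1 * (Q ^+ (r.+1 - i.+1) * sigma a (r.+1 - i.+1)%N).
  have := Hadd (P * b) (Q * a) r.+1; rewrite -Ha big_ord_recl HP HQ H0 expr0 !mul1r subn0.
  move=> E.
  have -> : \sum_(i < r.+1) P ^+ i.+1 * sigma b i.+1 * (Q ^+ (r.+1 - i.+1) * sigma a (r.+1 - i.+1)%N)
    = sigma a r.+1 - Q ^+ r.+1 * sigma a r.+1.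
    rewrite {1}E addrAC subrr add0r; apply eq_bigr => i _.
    by rewrite lift0 HP HQ.
  by rewrite mulrBr mulr1 mulrC.
have -> : sigma a r.+1 = (sigma a r.+1 * (1 - Q ^+ r.+1)) / (1 - Q ^+ r.+1).
  by rewrite mulrK // HU.
rewrite rec (T_rec _ _ (K := K)) //.
rewrite mulr_sumr mulr_sumr /geom mulr_suml; apply eq_bigr => i _.
rewrite IH; [|lia|lia].
have -> : P ^+ r.+1 = P ^+ i.+1 * P ^+ (r.+1 - i.+1).
  by rewrite -exprD subnKC.
ring.
Qed.

Definition cnt N K (w : {ffun 'I_N -> 'I_K}) (j : 'I_K) : nat := #|[pred t | w t == j]|.

Lemma sum_cnt N K (w : {ffun 'I_N -> 'I_K}) : (\sum_j cnt w j = N)%N.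
Proof.
transitivity (\sum_(t < N) 1)%N; last by rewrite sum1_card card_ord.
rewrite (sum_part w (fun _ => 1%N)); apply eq_bigr => j _; by rewrite mul1n.
Qed.

Lemma wt_cnt N K (w : {ffun 'I_N -> 'I_K}) : wt w = (\sum_(j < K) j.+1 * cnt w j)%N.
Proof. exact: (sum_part w (fun j : 'I_K => (nat_of_ord j).+1)). Qed.

Lemma cnt_le N K (w : {ffun 'I_N -> 'I_K}) j : (cnt w j <= N)%N.
Proof. by rewrite /cnt -[X in (_ <= X)%N]card_ord max_card. Qed.

Lemma step_b (R : comUnitRingType) (Q : R) sb k (p : {ffun 'I_k -> 'I_k.+1})
  (Hp : (\sum_(j < k) j.+1 * p j)%N == k) :
  Rval (fun j => nat_of_ord (p j)) (fun j : 'I_k => Q ^+ j.+1) * \prod_(j < k) sb j.+1 ^+ p j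
  = \sum_(N < k.+1) \sum_(w : {ffun 'I_N -> 'I_k} | [forall j, cnt w j == p j]) Phi Q sb w.
Proof.
have N0lt : (\sum_(j < k) p j < k.+1)%N.
  rewrite ltnS; apply: (leq_trans _ (eq_leq (eqP Hp))); apply: leq_sum => j _; by rewrite leq_pmull.
rewrite (bigD1 (Ordinal N0lt)) //= [X in _ = _ + X]big1 ?addr0.
  rewrite /Rval mulr_suml; apply eq_bigr => w Hc.
  rewrite /Phi /Rterm; congr (_ * _).
  rewrite (prod_part w (fun j : 'I_k => sb (nat_of_ord j).+1)); apply eq_bigr => j _.
  by move/forallP: Hc => Hc; rewrite -(eqP (Hc j)).
move=> N HN; apply: big1 => w /forallP Hc; case/eqP: HN; apply: val_inj => /=.
rewrite -(sum_cnt w); apply eq_bigr => j _; exact/eqP/Hc.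
Qed.

Lemma comb (R : comUnitRingType) (Q : R) sb k :
  \sum_(p : {ffun 'I_k -> 'I_k.+1} | (\sum_(j < k) j.+1 * p j)%N == k)
     Rval (fun j => nat_of_ord (p j)) (fun j : 'I_k => Q ^+ j.+1) * \prod_(j < k) sb j.+1 ^+ p j
  = T Q sb k k.
Proof.
rewrite (eq_bigr _ (@step_b R Q sb k)) exchange_big /T; apply eq_bigr => N _.
rewrite (exchange_big_dep (fun w : {ffun 'I_N -> 'I_k} => wt w == k)) /=; last first.
  move=> p w Hp /forallP Hc; apply/eqP; rewrite wt_cnt -[RHS](eqP Hp); apply eq_bigr => j _.
  by rewrite (eqP (Hc j)).
apply eq_bigr => w Hw.
have cltk : forall j, (cnt w j < k.+1)%N.
  move=> j; apply: (leq_ltn_trans (cnt_le w j)); exact: ltn_ord.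
pose p0 : {ffun 'I_k -> 'I_k.+1} := [ffun j => inord (cnt w j)].
have p0E : forall j, nat_of_ord (p0 j) = cnt w j by move=> j; rewrite ffunE inordK.
rewrite (big_pred1 p0) // => p /=.
apply/andP/eqP => [[_ /forallP Hc]|->].
  apply/ffunP => j; apply: val_inj => /=.
  by rewrite p0E (eqP (Hc j)).
split; last by apply/forallP => j; rewrite p0E.
apply/eqP; rewrite -[RHS](eqP Hw) wt_cnt; apply eq_bigr => j _; by rewrite p0E.
Qed.

Lemma unit_1mL (R : comUnitRingType) (L : R) : L \is a GRing.unit ->
  (forall j : nat, (0 < j)%N -> L ^+ j - 1 \is a GRing.unit) ->
  forall s : int, s != 0 -> 1 - L ^ s \is a GRing.unit.
Proof.
move=> HL Hj [j|j] Hs.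
  have j0 : (0 < j)%N by move: Hs; rewrite eqz_nat; lia.
  by rewrite -opprB unitrN Hj.
have HX : L ^+ j.+1 \is a GRing.unit by rewrite unitrX.
have -> : 1 - L ^ (Negz j) = (L ^+ j.+1)^-1 * (L ^+ j.+1 - 1).
  by rewrite NegzE -exprnN mulrBr mulVr // mulr1.
by rewrite unitrM unitrV HX Hj.
Qed.

Unset Implicit Arguments.
Set Strict Implicit.
Theorem mainTheorem1 (R : comUnitRingType) (L : R) (sigma : R -> nat -> R)
    (HK : stack_grothendieck_axioms L sigma)
    (b : R) (m n : int) (hn : n != 0) :
  let q := L^-1 in
  let a := b * q ^ m / (1 - q ^ n) in
  forall k : nat, (0 < k)%N ->
    sigma a k =
      (\sum_(p : {ffun 'I_k -> 'I_k.+1} | (\sum_(j < k) j.+1 * p j)%N == k)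
          Rval (fun j => nat_of_ord (p j)) (fun j : 'I_k => q ^ (n * (j.+1)%:Z))
          * \prod_(j < k) sigma b j.+1 ^+ p j)
      * q ^ (k%:Z * m).
Proof.
move=> q a k k0.
case: HK => HL Hj Hs Hsc.
have qm : forall s : int, q ^ s = L ^ (- s) by move=> s; rewrite exprz_inv.
have Hpow : forall (s : int) j, (L ^ s) ^+ j = L ^ (s * j%:Z).
  by move=> s j; rewrite -exprz_exp.
have HU : forall r, (0 < r)%N -> 1 - (q ^ n) ^+ r \is a GRing.unit.
  move=> r r0; rewrite qm Hpow; apply: unit_1mL => //.
  rewrite mulf_neq0 // ?oppr_eq0 // eqz_nat; lia.
have HU1 := HU 1%N isT; rewrite expr1 in HU1.
have Ha : a = q ^ m * b + q ^ n * a.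
  have : a * (1 - q ^ n) = b * q ^ m by rewrite /a divrK.
  move=> E; rewrite mulrC -E; ring.
have := @sig_T R sigma Hs (q ^ m) (q ^ n) a b.
move=> /(_ _ _ Ha HU k k (leqnn k)) ->.
- have -> : (fun j : 'I_k => q ^ (n * (j.+1)%:Z)) = (fun j : 'I_k => (q ^ n) ^+ j.+1).
    by apply: functional_extensionality => j; rewrite -exprz_exp.
  rewrite comb mulrC; congr (_ * _).
  by rewrite mulrC -exprz_exp.
- by move=> j; rewrite qm Hsc -Hpow.
- by move=> j; rewrite qm Hsc -Hpow.
Qed.
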